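(* Let $d\ge2$ and $\gamma>0$. For $N\ge c(\gamma)$, $P$-almost surely on the event $\{T_N<\gamma N^{2d}\}$ there exist $x_* = z_*e_{d+1}$ with $|z_*|\le N^{2d+1}$ and a $*$-path contained in $U\cap X_{[0,T_N]}$ starting at $x_*$ and ending in $S(x_*,[\sqrt N])$, where $U = \big[-2[\sqrt N],2[\sqrt N]\big]e_1 + \mathbb{Z}e_{d+1}$ (viewed as a subset of $E$).
   Context: $\mathbb{T}=(\mathbb{Z}/N\mathbb{Z})^d$, $E=\mathbb{T}\times\mathbb{Z}$, $P$ the law of simple random walk $X_\cdot$ on $E$ started uniformly on $\mathbb{T}\times\{0\}$; $X_{[0,n]} = \{X_0,\dots,X_n\}$. $e_1,\dots,e_{d+1}$ is the canonical basis (images in $E$, with $e_{d+1}$ the vertical direction). A finite $S\subset E$ disconnects $E$ if for large $M$, $\mathbb{T}\times(-\infty,-M]$ and $\mathbb{T}\times[M,\infty)$ are in distinct connected components of $E\setminus S$; $T_N = \inf\{n\ge0: X_{[0,n]}\text{ disconnects }E\}$. Two points are $*$-neighbors if their $\ell^\infty$-distance is 1; a $*$-path is a finite sequence of consecutive $*$-neighbors. $S(x,r)$ is the $\ell^\infty$-sphere of radius $r$ centered at $x$. $[\cdot]$ denotes integer part. *)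

(* Defs.v *)
From HB Require Import structures.
From mathcomp Require Import all_boot all_order all_algebra.
From mathcomp Require Import all_classical all_reals all_analysis.
Set Implicit Arguments. Unset Strict Implicit. Unset Printing Implicit Defensive.
Import Order.TTheory GRing.Theory Num.Theory.
Local Open Scope classical_set_scope.
Local Open Scope ring_scope.

Definition torus (N d : nat) := {ffun 'I_d -> 'I_N}.
Definition E (N d : nat) := (torus N d * int)%type.

(* The 2(d+1) steps +-e_1, ..., +-e_{d+1}: (i, b) with i : 'I_(d+1),
   i = ord_max meaning the vertical direction e_{d+1}; b = true for +, false for -. *)
Definition step (d : nat) := ('I_d.+1 * bool)%type.

Definition move (N d : nat) (x : E N d) (s : step d) : E N d :=
  let: (i, b) := s in
  if (i : nat) == d then (x.1, if b then x.2 + 1 else x.2 - 1)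
  else ([ffun j : 'I_d => if (j : nat) == (i : nat)
                          then (if b then ordS (x.1 j) else ord_pred (x.1 j))
                          else x.1 j], x.2).

Definition adj (N d : nat) (x y : E N d) : bool := [exists s : step d, move x s == y].

Definition p_init (R : realType) (N d : nat) (x : E N d) : R :=
  if x.2 == 0 then (N ^ d)%:R^-1 else 0.

Definition p_trans (R : realType) (N d : nat) (x y : E N d) : R :=
  #|[pred s : step d | move x s == y]|%:R / (2 * d.+1)%:R.

(* X is (under P) a simple random walk on E started uniformly on T x {0}:
   each X k is measurable (events {X k = v}), and the finite-dimensional
   distributions are those of the Markov chain with the above kernel. *)
Definition is_SRW (R : realType) (N d : nat) (dO : measure_display)
  (Omega : measurableType dO) (P : probability Omega R)
  (X : nat -> Omega -> E N d) : Prop :=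
  (forall k (v : E N d), measurable [set w | X k w = v]) /\
  (forall (v0 : E N d) (vs : seq (E N d)),
     P [set w | X 0%N w = v0 /\ forall k, (k < size vs)%N -> X k.+1 w = nth v0 vs k]
     = (p_init R v0 * \prod_(k < size vs) p_trans R (nth v0 (v0 :: vs) k) (nth v0 vs k))%:E).

Definition disconnects (N d : nat) (S : set (E N d)) : Prop :=
  exists M0 : nat, forall M : nat, (M0 <= M)%N ->
    ~ (exists (x : E N d) (p : seq (E N d)),
         x.2 <= - (M%:Z) /\ (M%:Z) <= (last x p).2 /\
         path (@adj N d) x p /\ (forall v, v \in x :: p -> ~ S v)).

Definition range_upto (N d : nat) (Omega : Type) (X : nat -> Omega -> E N d)
  (w : Omega) (n : nat) : set (E N d) :=
  [set v | exists k, (k <= n)%N /\ X k w = v].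

Definition is_TN (N d : nat) (Omega : Type) (X : nat -> Omega -> E N d)
  (w : Omega) (n : nat) : Prop :=
  disconnects (range_upto X w n) /\
  (forall m, (m < n)%N -> ~ disconnects (range_upto X w m)).

Definition tdist (N : nat) (a b : 'I_N) : nat :=
  let k := if (a <= b)%N then (b - a)%N else (a - b)%N in minn k (N - k).
Definition linf (N d : nat) (x y : E N d) : nat :=
  maxn (\max_(i < d) tdist (x.1 i) (y.1 i)) `|x.2 - y.2|%N.
Definition star_adj (N d : nat) (x y : E N d) : bool := linf x y == 1%N.

Definition inU (N d : nat) (x : E N d) : Prop :=
  (forall j : 'I_d, (j : nat) != 0%N -> (x.1 j : nat) = 0%N) /\
  (forall j : 'I_d, (j : nat) = 0%N ->
     exists k : int, (`|k| <= (2 * Nat.sqrt N)%:Z) /\ ((x.1 j : nat)%:Z = (k %% N%:Z)%Z)).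

Definition on_axis (N d : nat) (x : E N d) (z : int) : Prop :=
  (forall j : 'I_d, (x.1 j : nat) = 0%N) /\ x.2 = z.

(* Main.v *)
Require Import Defs.
From HB Require Import structures.
From mathcomp Require Import all_boot all_order all_algebra.
From mathcomp Require Import all_classical all_reals all_analysis.
Import Order.TTheory GRing.Theory Num.Theory.
From mathcomp Require Import zify.
From Stdlib Require PeanoNat.

Module Aux.
#[local] Set Implicit Arguments.
#[local] Unset Strict Implicit.

Section Local.
(* colors of the 4 cells around a corner: index 0 NE, 1 SE, 2 SW, 3 NW (true = blocked) *)
Definition col4 (c : bool * bool * bool * bool) (j : nat) : bool :=
  let: (c0, c1, c2, c3) := c in
  match j with 0 => c0 | 1 => c1 | 2 => c2 | _ => c3 end.
(* segment k separates cell (k+3)%4 and cell k *)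
Definition itf c k := col4 c ((k + 3) %% 4) != col4 c k.
Definition pdir c k : option nat :=
  if ~~ itf c k then None
  else if [&& itf c 0, itf c 1, itf c 2 & itf c 3] then
    Some (if ~~ col4 c k then (k + 1) %% 4 else (k + 3) %% 4)
  else if itf c ((k+1) %% 4) then Some ((k+1) %% 4)
  else if itf c ((k+2) %% 4) then Some ((k+2) %% 4)
  else Some ((k+3) %% 4).
Definition freeidx c k := if col4 c ((k + 3) %% 4) then k else (k + 3) %% 4.
Definition cadj i j := ((i + 1) %% 4 == j) || ((j + 1) %% 4 == i).

Lemma pdir_lt c k k' : pdir c k = Some k' -> k' < 4.
Proof.
rewrite /pdir; case: ifP => // _; case: ifP => _; first by case: ifP => _ [<-]; rewrite ltn_pmod.
by case: ifP => _; [|case: ifP => _]; case=> <-; rewrite ltn_pmod.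
Qed.

Lemma pdir_none c k : ~~ itf c k -> pdir c k = None.
Proof. by rewrite /pdir => ->. Qed.

Lemma pdir_some c k : k < 4 -> itf c k -> exists k', pdir c k = Some k' /\ k' != k.
Proof.
case: c => [ [ [c0 c1] c2] c3].
by case: k => [|[|[|[|k]]]] //= _; case: c0; case: c1; case: c2; case: c3 => //= _; eexists.
Qed.

Lemma pdir_sym c k k' : k < 4 -> pdir c k = Some k' -> pdir c k' = Some k.
Proof.
case: c => [ [ [c0 c1] c2] c3].
case: k => [|[|[|[|k]]]] //= _; case: c0; case: c1; case: c2; case: c3 => //= -[<-] //.
Qed.

Lemma pdir_itf c k k' : pdir c k = Some k' -> itf c k.
Proof. by rewrite /pdir; case: (itf c k). Qed.

Lemma pdir_free c k k' : k < 4 -> pdir c k = Some k' ->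
  [|| freeidx c k == freeidx c k', cadj (freeidx c k) (freeidx c k') |
   has (fun g => ~~ col4 c g && cadj (freeidx c k) g && cadj g (freeidx c k')) (iota 0 4)].
Proof.
case: c => [ [ [c0 c1] c2] c3].
case: k => [|[|[|[|k]]]] //= _; case: c0; case: c1; case: c2; case: c3 => //= -[<-] //.
Qed.

Lemma freeidx_free c k : k < 4 -> itf c k -> ~~ col4 c (freeidx c k).
Proof.
case: c => [ [ [c0 c1] c2] c3].
by case: k => [|[|[|[|k]]]] //= _; case: c0; case: c1; case: c2; case: c3.
Qed.
End Local.

Definition near8 (c c' : nat * nat) : bool :=
  [&& c.1 <= c'.1 + 1, c'.1 <= c.1 + 1, c.2 <= c'.2 + 1 & c'.2 <= c.2 + 1].
Definition near4 (c c' : nat * nat) : bool := near8 c c' && ((c.1 == c'.1) || (c.2 == c'.2)).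

Section Geo.
Variables (w m : nat) (bl : nat -> nat -> bool).
Definition blc (c : nat * nat) := bl c.1 c.2.
Definition cellat (p : nat * nat) (j : nat) : nat * nat :=
  let: (x, y) := p in match j with 0 => (x, y) | 1 => (x, y.-1) | 2 => (x.-1, y.-1) | _ => (x.-1, y) end.
Definition cols p := (blc (cellat p 0), blc (cellat p 1), blc (cellat p 2), blc (cellat p 3)).
Definition seg_at (p : nat * nat) (k : nat) : bool * nat * nat :=
  let: (x, y) := p in match k with 0 => (true, x, y) | 1 => (false, x, y) | 2 => (true, x, y.-1) | _ => (false, x.-1, y) end.
Definition segcells (s : bool * nat * nat) :=
  let: (ob, x, y) := s in if ob then ((x.-1, y), (x, y)) else ((x, y.-1), (x, y)).
Definition sitf s := blc (segcells s).1 != blc (segcells s).2.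
Definition bc s := if blc (segcells s).1 then (segcells s).1 else (segcells s).2.
Definition fc s := if blc (segcells s).1 then (segcells s).2 else (segcells s).1.
Definition ends (s : bool * nat * nat) : seq ((nat * nat) * nat) :=
  let: (ob, x, y) := s in if ob then [:: ((x, y), 0); ((x, y.+1), 2)] else [:: ((x, y), 1); ((x.+1, y), 3)].
Definition interior (p : nat * nat) := (0 < p.1 <= w + 2) && (0 < p.2 <= m + 2).
Definition pf (pk : (nat * nat) * nat) :=
  if interior pk.1 then omap (seg_at pk.1) (pdir (cols pk.1) pk.2) else None.
Definition partners s := pmap pf (ends s).
Definition erel s t := t \in partners s.

Lemma ends_at p k : interior p -> k < 4 -> (p, k) \in ends (seg_at p k).
Proof.
case: p => x y; rewrite /interior /= => /andP[/andP[x0 _] /andP[y0 _]].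
case: k => [|[|[|[|k]]]] //= _; rewrite ?inE ?eqxx //.
by rewrite prednK // eqxx orbT.
by rewrite prednK // eqxx orbT.
Qed.

Lemma at_ends s p k : (p, k) \in ends s -> seg_at p k = s /\ k < 4.
Proof.
case: s => [ [ob x] y]; case: ob; rewrite /= !inE => /orP[] /eqP [h1 h2]; subst; done.
Qed.

Lemma sitf_at p k : interior p -> k < 4 -> sitf (seg_at p k) = itf (cols p) k.
Proof.
case: p => x y; rewrite /interior /= => /andP[/andP[x0 _] /andP[y0 _]].
case: k => [|[|[|[|k]]]] //= _; rewrite /sitf /itf /=; by rewrite // eq_sym.
Qed.

Lemma seg_at_inj p k k' : interior p -> k < 4 -> k' < 4 -> seg_at p k = seg_at p k' -> k = k'.
Proof.
case: p => x y; rewrite /interior /= => /andP[/andP[x0 _] /andP[y0 _]].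
case: k => [|[|[|[|k]]]] //= _; case: k' => [|[|[|[|k']]]] //= _; case; lia.
Qed.

Lemma erelP s t : reflect (exists p k k', [/\ (p, k) \in ends s, interior p,
   pdir (cols p) k = Some k' & t = seg_at p k']) (erel s t).
Proof.
rewrite /erel /partners mem_pmap; apply: (iffP idP).
  case/mapP => -[p k] hin; rewrite /pf /=; case: ifP => // hi.
  case E: pdir => [k'|] //= [->]; by exists p, k, k'.
case=> p [k [k' [hin hi hp ->]]]; apply/mapP; exists (p, k) => //.
by rewrite /pf /= hi hp.
Qed.

Lemma erel_sym s t : erel s t -> erel t s.
Proof.
case/erelP => p [k [k' [hin hi hp ->]]]; have [hs hk] := at_ends hin.
apply/erelP; exists p, k', k; split.
- by apply: ends_at => //; exact: pdir_lt hp.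
- by [].
- exact: pdir_sym.
- by rewrite hs.
Qed.

Lemma erel_irr s : ~~ erel s s.
Proof.
apply/negP; case/erelP => p [k [k' [hin hi hp he]]]; have [hs hk] := at_ends hin.
have hk' := pdir_lt hp.
have [k1 [hp1 hne]] := pdir_some hk (pdir_itf hp).
rewrite hp in hp1; case: hp1 => hkk; subst k1.
rewrite -hs in he; have hkk := seg_at_inj hi hk' hk (esym he).
by rewrite hkk eqxx in hne.
Qed.

Lemma erel_itf s t : erel s t -> sitf s.
Proof.
case/erelP => p [k [k' [hin hi hp _]]]; have [hs hk] := at_ends hin.
by rewrite -hs sitf_at // (pdir_itf hp).
Qed.

Lemma cellat_near8 p i j : near8 (cellat p i) (cellat p j).
Proof.
case: p => x y; rewrite /near8.
case: i => [|[|[|[|i]]]]; case: j => [|[|[|[|j]]]] /=; apply/and4P; split; lia.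
Qed.

Lemma cadj_near4 p i j : interior p -> i < 4 -> j < 4 -> cadj i j -> near4 (cellat p i) (cellat p j).
Proof.
case: p => x y; rewrite /interior /= => /andP[/andP[x0 _] /andP[y0 _]].
rewrite /near4 /near8 /cadj.
case: i => [|[|[|[|i]]]] //= _; case: j => [|[|[|[|j]]]] //= _ _;
  rewrite /=; apply/andP; split; try (apply/and4P; split); lia.
Qed.

Lemma bc_at p k : interior p -> k < 4 -> exists i, bc (seg_at p k) = cellat p i.
Proof.
case: p => x y _; case: k => [|[|[|[|k]]]] //= _; rewrite /bc /=.
- by case: ifP => _; [exists 3|exists 0].
- by case: ifP => _; [exists 1|exists 0].
- by case: ifP => _; [exists 2|exists 1].
- by case: ifP => _; [exists 2|exists 3].
Qed.

Lemma fc_at p k : interior p -> k < 4 -> itf (cols p) k ->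
  fc (seg_at p k) = cellat p (freeidx (cols p) k).
Proof.
case: p => x y _; case: k => [|[|[|[|k]]]] //= _;
  rewrite /fc /freeidx /itf /cols /=; case: (blc _); case: (blc _) => //.
Qed.

Lemma bc_bl s : sitf s -> blc (bc s).
Proof. by rewrite /sitf /bc; case: ifP => //= _; case: (blc _). Qed.

Lemma fc_free s : sitf s -> ~~ blc (fc s).
Proof. by rewrite /sitf /fc; case: ifP => //= ->. Qed.

Lemma erel_near8 s t : erel s t -> near8 (bc s) (bc t).
Proof.
case/erelP => p [k [k' [hin hi hp ->]]]; have [hs hk] := at_ends hin.
have [i ->] := bc_at hi (pdir_lt hp).
rewrite -hs; have [j ->] := bc_at hi hk.
exact: cellat_near8.
Qed.

Lemma col4_cols p j : col4 (cols p) j = blc (cellat p j).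
Proof. by case: p => x y; case: j => [|[|[|[|j]]]]. Qed.

Lemma erel_free s t : erel s t -> exists g, [/\ path near4 (fc s) g,
  last (fc s) g = fc t & all (fun c => ~~ blc c) g].
Proof.
case/erelP => p [k [k' [hin hi hp ->]]]; have [hs hk] := at_ends hin.
have hk' := pdir_lt hp.
have hitf := pdir_itf hp.
have hitf' : itf (cols p) k' by apply: (pdir_itf (pdir_sym hk hp)).
rewrite -hs !fc_at //.
have hf := freeidx_free hk' hitf'; rewrite col4_cols in hf.
have hlt : forall c j, j < 4 -> freeidx c j < 4.
  by move=> c j hj; rewrite /freeidx; case: ifP => // _; rewrite ltn_pmod.
move: (pdir_free hk hp) => /or3P[/eqP ->| hc | hh].
- by exists [::].
- exists [:: cellat p (freeidx (cols p) k')]; split; rewrite /= ?andbT //.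
  by rewrite cadj_near4 ?hlt.
- case/hasP: hh => g hg /andP[/andP[hgf h1] h2].
  move: hg; rewrite mem_iota /= => hg.
  exists [:: cellat p g; cellat p (freeidx (cols p) k')]; split; rewrite /= ?andbT //.
  + by rewrite !cadj_near4 ?hlt.
  + by apply/andP; split => //; rewrite -col4_cols.
Qed.

Lemma chainB s q : path erel s q -> sitf s ->
  path near8 (bc s) (map bc q) /\ all blc (map bc q).
Proof.
elim: q s => [|t q IH] s //= /andP[hst hp] hs.
have ht : sitf t by apply: erel_itf (erel_sym hst).
have [h1 h2] := IH _ hp ht.
by rewrite h1 h2 (erel_near8 hst) bc_bl.
Qed.

Lemma chainF s q : path erel s q -> exists fq, [/\ path near4 (fc s) fq,
  last (fc s) fq = fc (last s q) & all (fun c => ~~ blc c) fq].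
Proof.
elim: q s => [|t q IH] s /=; first by exists [::].
case/andP => hst hp.
have [g [g1 g2 g3]] := erel_free hst.
have [fq [f1 f2 f3]] := IH _ hp.
exists (g ++ fq); rewrite cat_path last_cat g2 all_cat g1 f1 g3 f3; split => //.
Qed.
End Geo.

Lemma dsum_even (T : finType) (e : rel T) : symmetric e -> irreflexive e ->
  forall B : {set T}, ~~ odd (\sum_(u in B) \sum_(v in B) (e u v : nat)).
Proof.
move=> hs hi B; have [n leBn] := ubnP #|B|; elim: n B leBn => // n IH B leBn.
case: (set_0Vmem B) => [->|[a aB]]; first by rewrite big_set0.
have -> : \sum_(u in B) \sum_(v in B) (e u v : nat) =
   \sum_(u in B) ((e u a : nat) + \sum_(v in B :\ a) (e u v : nat)).
  by apply: eq_bigr => u _; rewrite (big_setD1 a aB).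
rewrite big_split /= (big_setD1 a aB) /= (big_setD1 a aB) /= hi add0n.
have -> : \sum_(v in B :\ a) (e a v : nat) = \sum_(u in B :\ a) (e u a : nat).
  by apply: eq_bigr => u _; rewrite hs.
rewrite !oddD addbA addbb /=; apply: IH.
by move: leBn; rewrite (cardsD1 a B) aB.
Qed.

Lemma handshake (T : finType) (e : rel T) (A : {set T}) : symmetric e -> irreflexive e ->
  (forall u v, u \in A -> e u v -> v \in A) ->
  ~~ odd (\sum_(u in A) #|[set v | e u v]|).
Proof.
move=> hs hi hc.
have -> : \sum_(u in A) #|[set v | e u v]| = \sum_(u in A) \sum_(v in A) (e u v : nat).
  apply: eq_bigr => u uA.
  rewrite -sum1dep_card big_mkcond /= [RHS]big_mkcond /=.
  apply: eq_bigr => v _; case: ifP => //= evu.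
  by rewrite (hc u v uA evu).
  by case: ifP.
exact: dsum_even.
Qed.

Section Dual.
Variables (w m : nat) (bl : nat -> nat -> bool).
Hypotheses (hw0 : forall h, bl 0 h) (hw1 : forall a h, w + 2 <= a -> bl a h)
  (hr0 : forall a, 0 < a <= w + 1 -> bl a 0 = false)
  (hrm : forall a, 0 < a <= w + 1 -> bl a (m + 2) = false).

Definition inseg (s : bool * nat * nat) : bool :=
  let: (ob, x, y) := s in if ob then (0 < x <= w + 2) && (y <= m + 2)
                                else (x <= w + 2) && (0 < y <= m + 2).
Definition segs := [seq s <- allpairs pair (allpairs pair [:: true; false] (iota 0 (w + 3))) (iota 0 (m + 3)) | inseg s].

Lemma mem_segs s : (s \in segs) = inseg s.
Proof.
rewrite mem_filter; case hs: (inseg s) => //=.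
case: s hs => [ [ob x] y] hs.
apply: (@allpairs_f _ _ _ pair (allpairs pair [:: true; false] (iota 0 (w + 3))) (iota 0 (m + 3)) (ob, x) y).
  apply: (@allpairs_f _ _ _ pair [:: true; false] (iota 0 (w + 3)) ob x).
    by case: ob {hs}.
  rewrite mem_iota; case: ob hs => /= /andP[]; lia.
rewrite mem_iota; case: ob hs => /= /andP[]; lia.
Qed.

Lemma seg_at_inseg p k : interior w m p -> k < 4 -> inseg (seg_at p k).
Proof.
case: p => x y; rewrite /interior /= => /andP[/andP[x0 x1] /andP[y0 y1]].
case: k => [|[|[|[|k]]]] //= _; apply/andP; split; lia.
Qed.

Lemma pf_some p k s : (p, k) \in ends s -> interior w m p -> sitf bl s ->
  exists k', [/\ pf w m bl (p, k) = Some (seg_at p k'), k' != k & k' < 4].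
Proof.
move=> hin hi hs; have [hse hk] := at_ends hin.
have hi' : itf (cols bl p) k by rewrite -(sitf_at bl hi hk) hse.
have [k' [hp hne]] := pdir_some hk hi'.
by exists k'; rewrite /pf /= hi hp (pdir_lt hp).
Qed.

Lemma pf_none p k s : (p, k) \in ends s -> ~~ (interior w m p && sitf bl s) ->
  pf w m bl (p, k) = None.
Proof.
move=> hin; have [hse hk] := at_ends hin.
rewrite /pf /=; case: ifP => //= hi hs.
by rewrite pdir_none // -(sitf_at bl hi hk) hse.
Qed.

Lemma distV x y k1 k2 : 0 < y -> k1 < 4 -> k2 < 4 -> k1 != 0 ->
  seg_at (x, y) k1 != seg_at (x, y.+1) k2.
Proof.
case: k1 => [|[|[|[|k1]]]] //=; case: k2 => [|[|[|[|k2]]]] //= *; apply/eqP; case; lia.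
Qed.

Lemma distH x y k1 k2 : 0 < x -> k1 < 4 -> k2 < 4 -> k1 != 1 ->
  seg_at (x, y) k1 != seg_at (x.+1, y) k2.
Proof.
case: k1 => [|[|[|[|k1]]]] //=; case: k2 => [|[|[|[|k2]]]] //= *; apply/eqP; case; lia.
Qed.

Definition sp := [:: (true, 1, 0); (true, w + 2, 0); (true, 1, m + 2); (true, w + 2, m + 2)].

Lemma partners_spec s : inseg s -> s \notin sp ->
  partners w m bl s = [::] \/
  exists t1 t2, partners w m bl s = [:: t1; t2] /\ t1 != t2.
Proof.
move=> hin hsp; case hs: (sitf bl s); last first.
  left; rewrite /partners.
  have he : forall pk, pk \in ends s -> pf w m bl pk = None.
    by move=> [p k] hin'; rewrite (pf_none hin') // hs andbF.
  case: s hs he hin hsp => [ [ob x] y] hs he _ _; case: ob hs he => hs he /=;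
   by rewrite !he ?inE ?eqxx ?orbT.
case: s hs hin hsp => [ [ob x] y] hs; case: ob hs => hs.
- rewrite /= => /andP[/andP[x0 x1] y1] hsp.
  have y0 : 0 < y.
    case: y hs y1 hsp => [|y] //= hs _ hsp.
    move: hs; rewrite /sitf /= /blc /=.
    have [ex|hx1] := eqVneq x 1; first by move: hsp; rewrite ex !inE eqxx.
    have [ex|hx2] := eqVneq x (w + 2); first by move: hsp; rewrite ex !inE eqxx !orbT.
    have e1 : bl x 0 = false by apply: hr0; lia.
    have e2 : bl x.-1 0 = false by apply: hr0; lia.
    by rewrite e1 e2.
  have ym : y < m + 2.
    case: (ltnP y (m + 2)) => // hy; have hy' : y = m + 2 by lia.
    move: hs; rewrite /sitf /= /blc /= hy'.
    have [ex|hx1] := eqVneq x 1; first by move: hsp; rewrite hy' ex !inE eqxx !orbT.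
    have [ex|hx2] := eqVneq x (w + 2); first by move: hsp; rewrite hy' ex !inE eqxx !orbT.
    have e1 : bl x (m + 2) = false by apply: hrm; lia.
    have e2 : bl x.-1 (m + 2) = false by apply: hrm; lia.
    by rewrite e1 e2.
  right.
  have [k1 [h1 n1 l1]] := @pf_some (x, y) 0 (true, x, y) (mem_head _ _)
     ltac:(rewrite /interior /=; lia) hs.
  have [k2 [h2 n2 l2]] := @pf_some (x, y.+1) 2 (true, x, y) ltac:(by rewrite !inE eqxx orbT)
     ltac:(rewrite /interior /=; lia) hs.
  exists (seg_at (x, y) k1), (seg_at (x, y.+1) k2); split; first by rewrite /partners /= h1 h2.
  exact: distV.
- rewrite /= => /andP[x1 /andP[y0 y1]] hsp.
  have x0 : 0 < x.
    case: x hs x1 hsp => [|x] //= hs _ hsp.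
    by move: hs; rewrite /sitf /= /blc /= !hw0.
  have xm : x < w + 2.
    case: (ltnP x (w + 2)) => // hx.
    by move: hs; rewrite /sitf /= /blc /= !hw1.
  right.
  have [k1 [h1 n1 l1]] := @pf_some (x, y) 1 (false, x, y) (mem_head _ _)
     ltac:(rewrite /interior /=; lia) hs.
  have [k2 [h2 n2 l2]] := @pf_some (x.+1, y) 3 (false, x, y) ltac:(by rewrite !inE eqxx orbT)
     ltac:(rewrite /interior /=; lia) hs.
  exists (seg_at (x, y) k1), (seg_at (x.+1, y) k2); split; first by rewrite /partners /= h1 h2.
  exact: distH.
Qed.

Lemma partners_s0 : exists t, partners w m bl (true, 1, 0) = [:: t].
Proof.
have hs : sitf bl (true, 1, 0) by rewrite /sitf /blc /= hw0 hr0 //; lia.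
have [k1 [h1 _ _]] := @pf_some (1, 1) 2 (true, 1, 0) ltac:(by rewrite !inE eqxx orbT)
     ltac:(rewrite /interior /=; lia) hs.
exists (seg_at (1, 1) k1); rewrite /partners /=.
rewrite h1 (@pf_none (1, 0) 0 (true, 1, 0)) ?mem_head //.
by rewrite /interior /= andbF.
Qed.

Lemma duality :
 (exists fq, [/\ path near4 (1, 0) fq, (last (1, 0) fq).2 = m + 2 & all (fun c => ~~ blc bl c) fq]) \/
 (exists bq, [/\ path near8 (0, 0) bq, (last (0, 0) bq).1 = w + 2 & all (blc bl) bq]).
Proof.
pose V := seq_sub segs.
pose e : rel V := fun u v => erel w m bl (val u) (val v).
have hs0 : (true, 1, 0) \in segs by rewrite mem_segs /=; lia.
pose u0 : V := SeqSub hs0.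
pose C := [set v | connect e u0 v].
have hdeg : forall u : V, uniq (partners w m bl (val u)) ->
    #|[set v | e u v]| = size (partners w m bl (val u)).
  move=> u hu.
  have -> : [set v | e u v] = [set v in pmap insub (partners w m bl (val u)) : seq V].
    by apply/setP => v; rewrite !inE /e /erel mem_pmap_sub.
  rewrite cardsE; move/card_uniqP: (pmap_sub_uniq V hu) => ->.
  rewrite size_pmap_sub; apply/eqP; rewrite -all_count; apply/allP => t ht.
  rewrite /= mem_segs.
  move: ht; rewrite /partners mem_pmap => /mapP [ [p k] hin].
  rewrite /pf /=; case: ifP => // hi; case E: pdir => [k'|] //= [->].
  exact: seg_at_inseg hi (pdir_lt E).
have hsym : symmetric e by move=> u v; apply/idP/idP => /erel_sym.
have hirr : irreflexive e by move=> u; apply/negbTE/erel_irr.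
have hcl : forall u v, u \in C -> e u v -> v \in C.
  by move=> u v; rewrite !inE => h1 h2; apply: connect_trans h1 (connect1 h2).
have hodd := handshake hsym hirr hcl.
have [u1 [hu1C hu1sp hu1ne]] : exists u1, [/\ u1 \in C, val u1 \in sp & val u1 != (true, 1, 0)].
  case: (boolP [exists u1 in C, (val u1 \in sp) && (val u1 != (true, 1, 0))]).
    by case/existsP => u1 /andP[? /andP[? ?]]; exists u1.
  rewrite negb_exists => /forallP hno; exfalso; move: hodd.
  have u0C : u0 \in C by rewrite inE connect0.
  rewrite (big_setD1 u0 u0C) /= oddD.
  have -> : odd #|[set v | e u0 v]|.
    by have [t ht] := partners_s0; rewrite hdeg ht.
  have -> : odd (\sum_(u in C :\ u0) #|[set v | e u v]|) = false.
    apply/negbTE; apply: (big_ind (fun n => ~~ odd n)) => //.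
      by move=> a b ha hb; rewrite oddD (negbTE ha) (negbTE hb).
    move=> u /setD1P [hne huC].
    have hsp : val u \notin sp.
      apply/negP => hsp; move: (hno u); rewrite huC hsp /=.
      suff -> : val u != (true, 1, 0) by [].
      by apply: contra hne => /eqP h; apply/eqP/val_inj.
    have hins : inseg (val u) by rewrite -mem_segs (valP u).
    case: (partners_spec hins hsp) => [h | [t1 [t2 [h hne']]]]; rewrite hdeg h //=.
    by rewrite inE hne'.
  by [].
move: hu1C; rewrite inE => /connectP [p hp hlast].
have hq : path (erel w m bl) (val u0) (map val p) by rewrite path_map.
have hl : last (val u0) (map val p) = val u1 by rewrite (last_map val p u0) -hlast.
have hs0itf : sitf bl (true, 1, 0) by rewrite /sitf /blc /= hw0 hr0 //; lia.
have hb0 : bc bl (true, 1, 0) = (0, 0) by rewrite /bc /blc /= hw0.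
have hf0 : fc bl (true, 1, 0) = (1, 0) by rewrite /fc /blc /= hw0.
have hw1' : bl (w + 2).-1 0 = false by apply: hr0; lia.
have hwm' : bl (w + 2).-1 (m + 2) = false by apply: hrm; lia.
move: hu1sp; rewrite !inE => /or4P [/eqP h | /eqP h | /eqP h | /eqP h].
- by rewrite h eqxx in hu1ne.
- right; have [h1 h2] := chainB hq hs0itf; rewrite /= hb0 in h1.
  exists (map (bc bl) (map val p)); split => //.
  by rewrite -hb0 last_map hl h /bc /blc /= hw1'.
- left; have [fq [f1 f2 f3]] := chainF hq; rewrite /= hf0 in f1 f2.
  exists fq; split => //.
  by rewrite f2 hl h /fc /blc /= hw0.
- right; have [h1 h2] := chainB hq hs0itf; rewrite /= hb0 in h1.
  exists (map (bc bl) (map val p)); split => //.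
  by rewrite -hb0 last_map hl h /bc /blc /= hwm'.
Qed.
End Dual.

Lemma first_hit (T : Type) (r : T -> T -> bool) (f : T -> nat) t c q :
  (forall a b, r a b -> f b <= f a + 1) -> path r c q -> f c <= t -> t <= f (last c q) ->
  exists q1 c' q2, [/\ c :: q = q1 ++ c' :: q2, f c' = t & all (fun x => f x < t) q1].
Proof.
move=> hr; elim: q c => [|y q IH] c /=.
  move=> _ h1 h2; exists [::], c, [::]; split => //; lia.
case/andP => hcy hp hc ht.
case: (ltnP (f c) t) => hlt; last first.
  by exists [::], c, (y :: q); split => //; lia.
have hy : f y <= t by have := hr _ _ hcy; lia.
have [q1 [c' [q2 [e1 e2 e3]]]] := IH y hp hy ht.
by exists (c :: q1), c', q2; rewrite /= e1 hlt e3.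
Qed.

Lemma dedup (T : eqType) (r : rel T) x p : path (fun a b => (a == b) || r a b) x p ->
  exists q, [/\ path r x q, last x q = last x p & {subset q <= p}].
Proof.
elim: p x => [|y p IH] x /=; first by exists [::].
case/andP => /orP[/eqP exy|hxy] hp; have [q [q1 q2 q3]] := IH y hp.
  subst y; exists q; split => // z hz; rewrite inE q3 ?orbT //.
exists (y :: q); rewrite /= hxy q1 q2; split => // z; rewrite !inE => /orP[->//|/q3 ->].
by rewrite orbT.
Qed.

Section GSec.


Variables (n d' r K : nat).
Hypotheses (hr1 : (1 <= r)%N) (hrN : (2 * r <= n.+1)%N).
Local Notation N := n.+1.
Local Notation d := d'.+1.

Definition gv (a : nat) : 'I_N := inord (if (r.+1 <= a)%N then (a - r.+1)%N else (N - (r.+1 - a))%N).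
Definition gco (a : nat) : torus N d := [ffun j : 'I_d => if (j : nat) == 0%N then gv a else ord0].
Definition emb (c : nat * nat) : E N d := (gco c.1, (c.2%:Z - (K.+1)%:Z)%R).

Lemma gv_val a : (0 < a <= 2 * r + 1)%N ->
  (gv a : nat) = (if (r.+1 <= a)%N then (a - r.+1)%N else (N - (r.+1 - a))%N).
Proof. move=> ha; rewrite /gv inordK //; case: ifP => h; lia. Qed.

Lemma adj_up c : adj (emb c) (emb (c.1, c.2.+1)).
Proof.
apply/existsP; exists (ord_max, true); rewrite /move /= eqxx /emb /=.
apply/eqP; congr pair; lia.
Qed.

Lemma adj_down c : adj (emb (c.1, c.2.+1)) (emb c).
Proof.
apply/existsP; exists (ord_max, false); rewrite /move /= eqxx /emb /=.
apply/eqP; case: c => x y /=; congr pair; lia.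
Qed.

Lemma adj_right c : (0 < c.1)%N -> (c.1 + 1 <= 2 * r + 1)%N -> adj (emb c) (emb (c.1.+1, c.2)).
Proof.
move=> h1 h2; apply/existsP; exists (ord0, true); rewrite /move /= /emb /=.
apply/eqP; congr pair; apply/ffunP => j; rewrite !ffunE.
case: eqP => // _; apply/val_inj => /=; rewrite !gv_val; try lia.
case: ifP => ha; case: ifP => hb; try lia.
- by rewrite modn_small; lia.
- have -> : ((N - (r.+1 - c.1)).+1 = N)%N by lia.
  by rewrite modnn; lia.
- by rewrite modn_small; lia.
Qed.

Lemma adj_left c : (0 < c.1)%N -> (c.1 + 1 <= 2 * r + 1)%N -> adj (emb (c.1.+1, c.2)) (emb c).
Proof.
move=> h1 h2; apply/existsP; exists (ord0, false); rewrite /move /= /emb /=.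
apply/eqP; congr pair; apply/ffunP => j; rewrite !ffunE.
case: eqP => // _; apply/val_inj => /=; rewrite !gv_val; try lia.
case: ifP => ha; case: ifP => hb; try lia.
- have -> : ((c.1.+1 - r.+1 + N).-1 = (c.1 - r.+1) + N)%N by lia.
  by rewrite modnDr modn_small; lia.
- have -> : ((c.1.+1 - r.+1 + N).-1 = N - 1)%N by lia.
  by rewrite modn_small; lia.
- have -> : ((N - (r.+1 - c.1.+1) + N).-1 = (N - (r.+1 - c.1)) + N)%N by lia.
  by rewrite modnDr modn_small; lia.
Qed.

Lemma tdist_gv a b : (0 < a <= 2 * r + 1)%N -> (0 < b <= 2 * r + 1)%N ->
  (a - b <= r)%N -> (b - a <= r)%N -> tdist (gv a) (gv b) = ((a - b) + (b - a))%N.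
Proof.
move=> ha hb h1 h2; rewrite /tdist !gv_val //.
case: (leqP r.+1 a) => ia; case: (leqP r.+1 b) => ib; case: leqP => ic; lia.
Qed.

Lemma linf_emb a b : (0 < a.1 <= 2 * r + 1)%N -> (0 < b.1 <= 2 * r + 1)%N ->
  (a.1 - b.1 <= r)%N -> (b.1 - a.1 <= r)%N ->
  linf (emb a) (emb b) = maxn ((a.1 - b.1) + (b.1 - a.1)) ((a.2 - b.2) + (b.2 - a.2)).
Proof.
move=> ha hb h1 h2; rewrite /linf big_ord_recl /= !ffunE /= tdist_gv //.
rewrite big1 ?maxn0; last first.
  move=> i _; rewrite !ffunE /=.
  by rewrite /tdist /= subnn minnE sub0n.
congr maxn; lia.
Qed.

Definition okc (c : nat * nat) := (0 < c.1 <= 2 * r + 1)%N.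

Lemma near4_adj a b : okc a -> okc b -> near4 a b -> a != b -> adj (emb a) (emb b).
Proof.
case: a => x y; case: b => x' y'; rewrite /okc /near4 /near8 /= => ha hb.
case/andP => /and4P[h1 h2 h3 h4] /orP[/eqP ex|/eqP ey] hne.
- subst x'.
  have [ey|ey] : y' = y.+1 \/ y = y'.+1.
    case: (ltngtP y y') => hy; [left|right|]; try lia.
    by subst y'; rewrite eqxx in hne.
  + by subst y'; apply: (adj_up (x, y)).
  + by subst y; apply: (adj_down (x, y')).
- subst y'.
  have [ex|ex] : x' = x.+1 \/ x = x'.+1.
    case: (ltngtP x x') => hx; [left|right|]; try lia.
    by subst x'; rewrite eqxx in hne.
  + subst x'; have := @adj_right (x, y); rewrite /=; apply; lia.
  + subst x; have := @adj_left (x', y); rewrite /=; apply; lia.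
Qed.

Lemma near8_star a b : okc a -> okc b -> near8 a b -> a != b -> star_adj (emb a) (emb b).
Proof.
case: a => x y; case: b => x' y'; rewrite /okc /near8 /= => ha hb.
case/and4P => h1 h2 h3 h4 hne.
rewrite /star_adj linf_emb //=; try lia.
apply/eqP; case: (eqVneq x x') => [ex|nx]; case: (eqVneq y y') => [ey|ny]; try lia.
by subst; rewrite eqxx in hne.
Qed.

Lemma path_adj c q : path (fun a b => near4 a b && (a != b)) c q -> all okc (c :: q) ->
  path (@adj N d) (emb c) (map emb q).
Proof.
elim: q c => [|y q IH] c //= /andP[/andP[h1 h2] hp] /and3P[hc hy hq].
by rewrite near4_adj // IH //= hy.
Qed.

Lemma path_star c q : path (fun a b => near8 a b && (a != b)) c q -> all okc (c :: q) ->
  path (@star_adj N d) (emb c) (map emb q).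
Proof.
elim: q c => [|y q IH] c //= /andP[/andP[h1 h2] hp] /and3P[hc hy hq].
by rewrite near8_star // IH //= hy.
Qed.

Lemma inU_emb c : okc c -> (r <= 2 * Nat.sqrt N)%N -> inU (emb c).
Proof.
case: c => x y; rewrite /okc /= => hc hs; split => j /=; rewrite ffunE.
  by move/negbTE => ->.
move=> j0; rewrite j0 eqxx gv_val //.
exists (x%:Z - r.+1%:Z)%R; split.
  by rewrite ler_norml; apply/andP; split; lia.
case: (leqP r.+1 x) => hx.
- rewrite modz_small; lia.
- rewrite -(modzDr (x%:Z - r.+1%:Z) N%:Z) modz_small; lia.
Qed.

Lemma on_axis_emb h : on_axis (emb (r.+1, h)) (h%:Z - K.+1%:Z)%R.
Proof.
split => // j /=; rewrite ffunE; case: ifP => // _; rewrite gv_val ?leqnn ?subnn //; lia.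
Qed.

Lemma linf_center c : okc c -> (c.1 - r.+1 <= r)%N -> (r.+1 - c.1 <= r)%N ->
  linf (emb (r.+1, 0%N)) (emb c) = (0 + 0)%N.
Proof. Abort.


End GSec.

Section HSec.
Local Open Scope classical_set_scope.
Local Open Scope ring_scope.

Lemma srw_good (R : realType) (N d : nat) (dO : measure_display) (Omega : measurableType dO)
  (P : probability Omega R) (X : nat -> Omega -> E N d) : is_SRW P X ->
  \forall w \ae P, (X 0%N w).2 = 0 /\ forall k, adj (X k w) (X k.+1 w).
Proof.
move=> [hm hP].
pose prodv v0 (vs : seq (E N d)) : R := p_init R v0 * \prod_(k < size vs) p_trans R (nth v0 (v0 :: vs) k) (nth v0 vs k).
pose cyl v0 (vs : seq (E N d)) := [set w | X 0%N w = v0 /\ forall k, (k < size vs)%N -> X k.+1 w = nth v0 vs k].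
have mcyl : forall v0 vs, measurable (cyl v0 vs).
  move=> v0 vs.
  have -> : cyl v0 vs = [set w | X 0%N w = v0] `&` \bigcap_k
      (if (k < size vs)%N then [set w | X k.+1 w = nth v0 vs k] else setT).
    apply/seteqP; split => w /=.
      by move=> [h0 hk]; split => // k _; case: ifP => hk' //; apply: hk.
    move=> [h0 hk]; split => // k hk'; by move: (hk k I); rewrite hk'.
  apply: measurableI => //; apply: bigcapT_measurable => k; case: ifP => _ //.
pose F (i : nat) : set Omega := if (unpickle i : option (E N d * seq (E N d))) is Some (v0, vs)
   then (if prodv v0 vs == 0 then cyl v0 vs else set0) else set0.
have negF : forall i, P.-negligible (F i).
  move=> i; rewrite /F; case: unpickle => [ [v0 vs]|]; last exact: negligible_set0.
  case: eqP => h; last exact: negligible_set0.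
  apply/negligibleP; first exact: mcyl.
  apply: eq_trans (hP v0 vs) _; by rewrite -/(prodv v0 vs) h.
apply: negligibleS (negligible_bigcup negF).
move=> w /= nG; apply: contrapT => hn; apply: nG.
have key : forall vs, cyl (X 0%N w) vs w -> prodv (X 0%N w) vs != 0.
  move=> vs hc; apply/negP => /eqP h0; apply: hn.
  exists (pickle (X 0%N w, vs)) => //; by rewrite /F pickleK h0 eqxx.
pose vsn n := [seq X i.+1 w | i <- iota 0 n].
have hc : forall n, cyl (X 0%N w) (vsn n) w.
  move=> n; split => // k; rewrite size_map size_iota => hk.
  by rewrite (nth_map 0%N) ?size_iota // nth_iota.
split.
  move: (key _ (hc 0%N)); rewrite /prodv /p_init.
  have [//|hne] := eqVneq (X 0%N w).2 0; by rewrite mul0r eqxx.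
move=> k; move: (key _ (hc k.+1)); rewrite /prodv mulf_eq0 negb_or => /andP[_].
have hk : (k < size (vsn k.+1))%N by rewrite size_map size_iota.
move/prodf_neq0 => /(_ (Ordinal hk)) /=; clear hk.
have -> : nth (X 0%N w) (X 0%N w :: vsn k.+1) k = X k w.
  case: k => [|k] //=; by rewrite (nth_map 0%N) ?size_iota // nth_iota.
rewrite (nth_map 0%N) ?size_iota // nth_iota // add0n => /(_ isT).
rewrite /p_trans /adj; case: (boolP [exists s, move (X k w) s == X k.+1 w]) => // hex.
have -> : #|[pred s | move (X k w) s == X k.+1 w]| = 0%N.
  apply: eq_card0 => s; rewrite inE; apply/negP => hs; move/negP: hex; apply.
  by apply/existsP; exists s.
by rewrite mul0r eqxx.
Qed.

End HSec.

Section ISec.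
Local Open Scope classical_set_scope.

Lemma det n d' (S : set (E n.+1 d'.+1)) T : (4 <= n.+1)%N -> disconnects S ->
  (forall v, S v -> (absz v.2 <= T)%N) ->
  exists (xs : E n.+1 d'.+1) (zs : int) (p : seq (E n.+1 d'.+1)),
    [/\ on_axis xs zs, (absz zs <= T)%N, path (@star_adj _ _) xs p,
        (forall v, v \in xs :: p -> inU v /\ S v) & linf xs (last xs p) = Nat.sqrt n.+1].
Proof.
move=> hN [M0 hM0] hS.
set r := Nat.sqrt n.+1.
have hr2 : (2 <= r)%N.
  apply/ssrnat.leP; apply (proj1 (PeanoNat.Nat.sqrt_le_square n.+1 2)); apply/ssrnat.leP; lia.
have hrr : (r * r <= n.+1)%N.
  have [h1 _] := PeanoNat.Nat.sqrt_spec n.+1 (PeanoNat.Nat.le_0_l _); by apply/ssrnat.leP.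
have h2r : (2 * r <= n.+1)%N by nia.
have hr1 : (1 <= r)%N by lia.
set K := maxn M0 T.
pose em := emb n d' r K.
pose bl a h := [|| a == 0%N, (2 * r + 2 <= a)%N | `[< S (em (a, h)) >]].
have hfree : forall c, ~~ bl c.1 c.2 -> okc r c /\ ~ S (em c).
  case=> a h /=; rewrite /bl => /norP [ha /norP [hb hc]]; split.
    rewrite /okc /=; lia.
  by move=> hs; move: hc; rewrite asboolT.
have hblk : forall c, bl c.1 c.2 -> okc r c -> S (em c).
  case=> a h /=; rewrite /bl /okc /= => /or3P[/eqP ->|ha|/asboolP //]; lia.
have hw0 : forall h, bl 0%N h by move=> h; rewrite /bl eqxx.
have hw1 : forall a h, (2 * r + 2 <= a)%N -> bl a h by move=> a h ha; rewrite /bl ha orbT.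
have hnS : forall a h, ~ S (em (a, h)) -> (0 < a <= 2 * r + 1)%N -> bl a h = false.
  move=> a h hs ha; rewrite /bl asboolF //; apply/negbTE/norP; split; first lia.
  by rewrite orbF; lia.
have hr0 : forall a, (0 < a <= 2 * r + 1)%N -> bl a 0%N = false.
  move=> a ha; apply: hnS => // /hS /=; lia.
have hrm : forall a, (0 < a <= 2 * r + 1)%N -> bl a (2 * K + 2)%N = false.
  move=> a ha; apply: hnS => // /hS /=; lia.
have := @duality (2 * r) (2 * K) bl hw0 hw1 hr0 hrm.
case=> [ [fq [f1 f2 f3]]|[bq [b1 b2 b3]]].
- (* free crossing: contradiction *)
  exfalso.
  have hsub : subrel near4 (fun a b => (a == b) || (near4 a b && (a != b))).
    by move=> a b h; case: (eqVneq a b) => //= _; rewrite h.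
  have [q [q1 q2 q3]] := dedup (sub_path hsub f1).
  have h10 : ~~ bl 1%N 0%N by rewrite hr0 //; lia.
  have hallq : forall c, c \in (1%N, 0%N) :: q -> okc r c /\ ~ S (em c).
    move=> c; rewrite inE => /orP[/eqP ->|/q3 hc]; first exact: (hfree (1%N, 0%N)).
    by apply: hfree; move/allP: f3; apply.
  apply: (hM0 K.+1); first lia.
  exists (em (1%N, 0%N)), (map em q); split; [| split; [| split]].
  + rewrite /em /emb /=; lia.
  + rewrite (last_map em) q2 /em /emb /=; move: f2 => /= ->; lia.
  + apply: path_adj => //; apply/allP => c hc; exact: (hallq c hc).1.
  + move=> v; rewrite -map_cons => /mapP [c hc ->]; exact: (hallq c hc).2.
- have hst1 : forall a b, near8 a b -> (b.1 <= a.1 + 1)%N.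
    by move=> a b /and4P[].
  have [q1 [c' [q2 [e1 e2 e3]]]] := @first_hit _ near8 fst r.+1 (0%N, 0%N) bq hst1 b1
     ltac:(rewrite /=; lia) ltac:(rewrite b2; lia).
  case: q1 e1 e3 => [|x0 q1'] /= e1 e3.
    by case: e1 => ec _; rewrite -ec /= in e2.
  case: e1 => ex0 ebq; subst bq.
  have hp2 : path near8 c' q2 by move: b1; rewrite cat_path => /andP[_] /= /andP[_].
  have hbl2 : forall x, x \in c' :: q2 -> bl x.1 x.2.
    move=> x hx; move/allP: b3; apply; by rewrite mem_cat hx orbT.
  have hlast : (last c' q2).1 = (2 * r + 2)%N by rewrite -b2 last_cat.
  pose dist8 (c x : nat * nat) := maxn ((c.1 - x.1) + (x.1 - c.1)) ((c.2 - x.2) + (x.2 - c.2)).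
  have hst2 : forall a b, near8 a b -> (dist8 c' b <= dist8 c' a + 1)%N.
    move=> a b /and4P[h1 h2 h3 h4]; rewrite /dist8; lia.
  have [p1 [c'' [p2 [g1 g2 g3]]]] := @first_hit _ near8 (dist8 c') r c' q2 hst2 hp2
     ltac:(rewrite /dist8; lia) ltac:(rewrite /dist8 hlast; lia).
  case: p1 g1 g3 => [|x1 p1'] /= g1 g3.
    by case: g1 => ec _; rewrite -ec /dist8 in g2; lia.
  case: g1 => ex1 eq2; subst x1 q2; case/andP: g3 => _ g3.
  have hpath : path near8 c' (rcons p1' c'').
    move: hp2; rewrite cat_path rcons_path => /andP[-> /=] /andP[-> _] //.
  have hsub8 : subrel near8 (fun a b => (a == b) || (near8 a b && (a != b))).
    by move=> a b h; case: (eqVneq a b) => //= _; rewrite h.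
  have [P' [d1 d2 d3]] := dedup (sub_path hsub8 hpath).
  have hcells : forall x, x \in c' :: P' -> okc r x /\ S (em x).
    move=> x hx.
    have hd : (dist8 c' x <= r)%N /\ x \in c' :: p1' ++ c'' :: p2.
      move: hx; rewrite inE => /orP[/eqP ->|/d3]; first by rewrite /dist8 mem_head; split => //; lia.
      rewrite mem_rcons inE => /orP[/eqP ->|hx]; first by rewrite g2 inE mem_cat mem_head !orbT.
      by split; [have := (allP g3) x hx; lia | rewrite inE mem_cat hx orbT].
    have hok : okc r x by rewrite /okc; move: hd => [+ _]; rewrite /dist8; lia.
    split => //; apply: hblk => //; apply: hbl2; exact: hd.2.
  have ec : c' = (r.+1, c'.2) by rewrite -e2; case: (c').
  exists (em c'), (c'.2%:Z - K.+1%:Z)%R, (map em P'); split.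
  + rewrite {1}ec; exact: on_axis_emb.
  + exact: (hS (em c') (hcells c' (mem_head _ _)).2).
  + apply: path_star => //; apply/allP => x hx; exact: (hcells x hx).1.
  + rewrite -map_cons => v /mapP [x hx ->]; split; last exact: (hcells x hx).2.
    apply: inU_emb => //; first exact: (hcells x hx).1.
    rewrite /r; lia.
  + rewrite (last_map em) d2 last_rcons.
    have hc'' : c'' \in c' :: P'.
      by rewrite -(last_rcons c' p1' c'') -d2 mem_last.
    have hok1 := (hcells c' (mem_head _ _)).1; have hok2 := (hcells c'' hc'').1.
    rewrite linf_emb //; try by move: g2; rewrite /dist8; lia.
Qed.

End ISec.

Section JSec.
Local Open Scope ring_scope.

Lemma adj_height N d (x y : E N d) : adj x y -> (absz y.2 <= absz x.2 + 1)%N.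
Proof.
case/existsP => -[i b] /eqP <-; rewrite /move; case: ifP => _ /=; last lia.
case: b; lia.
Qed.
Arguments adj_height {N d x y}.


End JSec.
End Aux.

Local Open Scope classical_set_scope.
Local Open Scope ring_scope.

Theorem lemma7p4 (R : realType) (d : nat) (gamma : R) :
  (2 <= d)%N -> 0 < gamma ->
  exists c : nat, forall N : nat, (c <= N)%N ->
  forall (dO : measure_display) (Omega : measurableType dO)
         (P : probability Omega R) (X : nat -> Omega -> E N d),
  is_SRW P X ->
  {ae P, forall w, forall T : nat, is_TN X w T -> T%:R < gamma * (N%:R ^+ (2 * d)) ->
     exists (xs : E N d) (zs : int) (p : seq (E N d)),
       on_axis xs zs /\ (`|zs| <= (N ^ (2 * d + 1))%:Z) /\
       path (@star_adj N d) xs p /\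
       (forall v, v \in xs :: p -> inU v /\ range_upto X w T v) /\
       linf xs (last xs p) = Nat.sqrt N}.
Proof.
move=> hd hg; exists (maxn 4 (Num.trunc gamma).+1) => N hN dO Omega P X hX.
apply: filterS (Aux.srw_good hX) => w [h0 hadj] T [hdisc _] hT.
have hh : forall k, (absz (X k w).2 <= k)%N.
  elim=> [|k IH]; first by rewrite h0.
  have := Aux.adj_height (hadj k); lia.
have hTN : (T < N ^ (2 * d + 1))%N.
  rewrite -(ltr_nat R) natrX addn1 exprS.
  apply: (lt_le_trans hT); apply: ler_wpM2r; first by rewrite exprn_ge0.
  apply: le_trans (ltW (truncnS_gt gamma)) _; rewrite ler_nat; exact: leq_trans (leq_maxr _ _) hN.
case: N hN X hX hdisc hT hh hTN h0 hadj => [|n] hN X hX hdisc hT hh hTN h0 hadj; first lia.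
case: d hd X hX hdisc hT hh hTN h0 hadj => [|d'] hd X hX hdisc hT hh hTN h0 hadj; first lia.
have hS : forall v, range_upto X w T v -> (absz v.2 <= T)%N.
  by move=> v [k [hk <-]]; have := hh k; lia.
have [xs [zs [p [ha hb hc hd' he]]]] := Aux.det (S := range_upto X w T) ltac:(lia) hdisc hS.
exists xs, zs, p; split => //; split; last by [].
lia.
Qed.
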